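(* Consider the downlink MISO-NOMA beamforming setting described in the context, assume the problem is feasible, and let $P_g$ be the green power. If $P_{ava}\le P_g$, then the weighted-sum problem $$\max_{\{\mathbf{w}_i\}_{i=1}^K\in\mathcal{F}} \;(1-\alpha)\frac{f_1(\{\mathbf{w}_i\}_{i=1}^K)}{f_1^*}+\alpha\frac{f_2(\{\mathbf{w}_i\}_{i=1}^K)}{f_2^*}$$ provides the same solution for all weights $\alpha\in[0,1]$, i.e., the normalized spectral efficiency $f_1/f_1^*$ and normalized energy efficiency $f_2/f_2^*$ attained at its optimal solution do not depend on $\alpha$.
   Context: A base station with $N$ antennas serves $K$ single-antenna users, $\mathcal{K}=\{1,\dots,K\}$. User $i$ has channel vector $\mathbf{h}_i\in\mathbb{C}^N$ and noise variance $\sigma_i^2>0$; users are ordered so that $\|\mathbf{h}_K\|^2\le\cdots\le\|\mathbf{h}_1\|^2$. Beamforming vectors are $\mathbf{w}_1,\dots,\mathbf{w}_K\in\mathbb{C}^N$. For $i\in\mathcal{K}$, $k\le i$: $R_k^{(i)}=\log_2\!\Big(1+\frac{|\mathbf{h}_k^H\mathbf{w}_i|^2}{\sum_{j=1}^{i-1}|\mathbf{h}_k^H\mathbf{w}_j|^2+\sigma_k^2}\Big)$, $R_i=\min_{1\le k\le i}R_k^{(i)}$. Spectral efficiency $f_1=\sum_{i=1}^K R_i$; global energy efficiency $f_2=\frac{\sum_{i=1}^K R_i}{\frac{1}{\epsilon_0}\sum_{i=1}^K\|\mathbf{w}_i\|_2^2+P_l}$ with $\epsilon_0\in(0,1]$,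 $P_l>0$. For available power $P_{ava}$ and rate thresholds $R_i^{th}\ge0$, the feasible set $\mathcal{F}$ is defined by (i) $\sum_i\|\mathbf{w}_i\|_2^2\le P_{ava}$, (ii) $R_i\ge R_i^{th}$ for all $i$, (iii) $|\mathbf{h}_i^H\mathbf{w}_K|^2\ge\cdots\ge|\mathbf{h}_i^H\mathbf{w}_1|^2$ for all $i$. $f_1^*$ is the maximum of $f_1$ subject to (i) and (iii); $f_2^*$ is the maximum of $f_2$ over $\mathcal{F}$ (both depend on $P_{ava}$). The green power $P_g$ is the available power level at which the maximum global energy efficiency (the optimal value of maximizing $f_2$ over $\mathcal{F}$, viewed as a function of $P_{ava}$) is reached, beyond which increasing $P_{ava}$ yields no further increase in either the maximal energy efficiency or the corresponding sum rate. *)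

(* Defs.v *)
From HB Require Import structures.
From mathcomp Require Import all_boot all_order all_algebra.
From mathcomp Require Import all_classical all_reals.
From mathcomp Require Import exp.
From mathcomp Require Import complex.
Set Implicit Arguments. Unset Strict Implicit. Unset Printing Implicit Defensive.
Import Order.TTheory GRing.Theory Num.Theory.
Local Open Scope ring_scope.
Local Open Scope classical_set_scope.

Section NOMA.
Variable R : realType.

Definition cabs2 (z : R[i]) : R := (complex.Re z) ^+ 2 + (complex.Im z) ^+ 2.

Definition hdot (N : nat) (h w : 'cV[R[i]]_N) : R[i] :=
  \sum_(n < N) conjc (h n ord0) * w n ord0.

Definition sqnorm (N : nat) (w : 'cV[R[i]]_N) : R := \sum_(n < N) cabs2 (w n ord0).

Definition log2 (x : R) : R := ln x / ln 2.

Variables (N K : nat).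
Variables (h : 'I_K -> 'cV[R[i]]_N) (sigma2 : 'I_K -> R).

(* R_k^{(i)} : rate of decoding user i's signal at user k (k <= i) *)
Definition Rki (w : 'I_K -> 'cV[R[i]]_N) (i k : 'I_K) : R :=
  log2 (1 + cabs2 (hdot (h k) (w i)) /
            (\sum_(j < K | (j < i)%N) cabs2 (hdot (h k) (w j)) + sigma2 k)).

Definition rate (w : 'I_K -> 'cV[R[i]]_N) (i : 'I_K) : R :=
  \big[Order.min/Rki w i i]_(k < K | (k <= i)%N) Rki w i k.

Definition f1 (w : 'I_K -> 'cV[R[i]]_N) : R := \sum_(i < K) rate w i.

Definition tpower (w : 'I_K -> 'cV[R[i]]_N) : R := \sum_(i < K) sqnorm (w i).

Definition f2 (eps0 Pl : R) (w : 'I_K -> 'cV[R[i]]_N) : R :=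
  f1 w / (eps0^-1 * tpower w + Pl).

Definition power_ok (Pava : R) (w : 'I_K -> 'cV[R[i]]_N) : Prop := tpower w <= Pava.

Definition qos_ok (Rth : 'I_K -> R) (w : 'I_K -> 'cV[R[i]]_N) : Prop :=
  forall i, Rth i <= rate w i.

Definition sic_ok (w : 'I_K -> 'cV[R[i]]_N) : Prop :=
  forall i j j' : 'I_K, (j <= j')%N -> cabs2 (hdot (h i) (w j)) <= cabs2 (hdot (h i) (w j')).

Definition feasible (Rth : 'I_K -> R) (Pava : R) : set ('I_K -> 'cV[R[i]]_N) :=
  [set w | power_ok Pava w /\ qos_ok Rth w /\ sic_ok w].

Definition f1star (Pava : R) : R :=
  sup [set f1 w | w in [set w | power_ok Pava w /\ sic_ok w]].

Definition f2star (eps0 Pl : R) (Rth : 'I_K -> R) (Pava : R) : R :=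
  sup [set f2 eps0 Pl w | w in feasible Rth Pava].

Definition sumrate_at_maxEE (eps0 Pl : R) (Rth : 'I_K -> R) (Pava : R) : R :=
  sup [set f1 w | w in [set w | feasible Rth Pava w /\
                                f2 eps0 Pl w = f2star eps0 Pl Rth Pava]].

Definition green_power (eps0 Pl : R) (Rth : 'I_K -> R) (Pg : R) : Prop :=
  0 <= Pg /\
  (forall P P' : R, 0 <= P -> P < P' -> P' <= Pg ->
     feasible Rth P !=set0 ->
     f2star eps0 Pl Rth P < f2star eps0 Pl Rth P') /\
  (forall P : R, Pg <= P ->
     f2star eps0 Pl Rth P = f2star eps0 Pl Rth Pg /\
     sumrate_at_maxEE eps0 Pl Rth P = sumrate_at_maxEE eps0 Pl Rth Pg).

Definition wobj (eps0 Pl : R) (Rth : 'I_K -> R) (Pava alpha : R)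
  (w : 'I_K -> 'cV[R[i]]_N) : R :=
  (1 - alpha) * (f1 w / f1star Pava) + alpha * (f2 eps0 Pl w / f2star eps0 Pl Rth Pava).

Definition wopt (eps0 Pl : R) (Rth : 'I_K -> R) (Pava alpha : R)
  (w : 'I_K -> 'cV[R[i]]_N) : Prop :=
  feasible Rth Pava w /\
  forall v, feasible Rth Pava v ->
    wobj eps0 Pl Rth Pava alpha v <= wobj eps0 Pl Rth Pava alpha w.

End NOMA.

(* Main.v *)
Require Import Defs.
From HB Require Import structures.
From mathcomp Require Import all_boot all_order all_algebra.
From mathcomp Require Import all_classical all_reals.
From mathcomp Require Import exp.
From mathcomp Require Import complex.
From mathcomp Require Import ring lra.
Import Order.TTheory GRing.Theory Num.Theory.
Local Open Scope ring_scope.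
Local Open Scope classical_set_scope.


Lemma cabs2_ge0 {R : realType} (z : R[i]) : 0 <= cabs2 z.
Proof. by rewrite /cabs2 addr_ge0 // sqr_ge0. Qed.

Lemma cabs2_add {R : realType} (x y : R[i]) : cabs2 (x + y) <= 2 * (cabs2 x + cabs2 y).
Proof.
case: x => a b; case: y => c d; rewrite /cabs2 /=.
have := sqr_ge0 (a - c); have := sqr_ge0 (b - d); nra.
Qed.

Lemma cabs2_mulconj {R : realType} (x y : R[i]) : cabs2 (conjc x * y) = cabs2 x * cabs2 y.
Proof.
case: x => a b; case: y => c d; rewrite /cabs2 /=.
ring.
Qed.

Lemma cabs2_sum {R : realType} (I : Type) (s : seq I) (F : I -> R[i]) :
  cabs2 (\sum_(j <- s) F j) <= 2 ^+ size s * \sum_(j <- s) cabs2 (F j).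
Proof.
elim: s => [|a s IH]; first by rewrite !big_nil /cabs2 /= expr0n /= addr0 mulr0.
rewrite !big_cons /=.
apply: le_trans (cabs2_add _ _) _.
have h1 : 1 <= 2 ^+ size s :> R by apply: exprn_ege1; lra.
have h2 := cabs2_ge0 (F a).
have h3 : 0 <= \sum_(j <- s) cabs2 (F j) by rewrite sumr_ge0 // => *; exact: cabs2_ge0.
rewrite exprS.
move: IH h1 h2 h3; set x := cabs2 _; set y := \sum_(j <- s) _; set z := 2 ^+ _; set u := cabs2 _.
nra.
Qed.

Lemma sum_ge_term {R : realType} (n : nat) (F : 'I_n -> R) (j : 'I_n) :
  (forall i, 0 <= F i) -> F j <= \sum_(i < n) F i.
Proof. by move=> F0; rewrite (bigD1 j) //= lerDl sumr_ge0. Qed.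

Lemma sqnorm_ge0 {R : realType} N (w : 'cV[R[i]]_N) : 0 <= sqnorm w.
Proof. by rewrite /sqnorm sumr_ge0 // => *; exact: cabs2_ge0. Qed.

Lemma tpower_ge0 {R : realType} N K (w : 'I_K -> 'cV[R[i]]_N) : 0 <= tpower w.
Proof. by rewrite /tpower sumr_ge0 // => *; exact: sqnorm_ge0. Qed.
Arguments tpower_ge0 {R N K} w.


Definition CN (R : realType) (N : nat) : R := 2 ^+ size (index_enum 'I_N).

Lemma CN_ge0 (R : realType) N : 0 <= CN R N.
Proof. by rewrite /CN exprn_ge0. Qed.

Lemma hdot_bound {R : realType} N (a b : 'cV[R[i]]_N) :
  cabs2 (hdot a b) <= CN R N * (sqnorm a * sqnorm b).
Proof.
rewrite /hdot; apply: le_trans; first exact: cabs2_sum.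
rewrite /CN ler_wpM2l ?exprn_ge0 // /sqnorm mulr_suml.
apply: ler_sum => n _; rewrite cabs2_mulconj ler_wpM2l ?cabs2_ge0 //.
exact: (@sum_ge_term R N (fun n => cabs2 (b n ord0)) n (fun i => cabs2_ge0 _)).
Qed.

Lemma rate_le_Rki {R : realType} N K (h : 'I_K -> 'cV[R[i]]_N) sigma2 w i :
  rate h sigma2 w i <= Rki h sigma2 w i i.
Proof.
rewrite /rate; elim/big_rec: _ => // k x _ hx.
by rewrite ge_min hx orbT.
Qed.

Lemma Rki_bound {R : realType} N K (h : 'I_K -> 'cV[R[i]]_N) sigma2 w i :
  0 < sigma2 i ->
  Rki h sigma2 w i i <= tpower w * (CN R N * sqnorm (h i) / sigma2 i / ln 2).
Proof.
move=> s0.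
have l2 : 0 < ln (2 : R) by apply: ln_gt0; lra.
rewrite /Rki /log2.
set c := cabs2 _; set s := \sum_(j < K | _) _.
have c0 : 0 <= c by exact: cabs2_ge0.
have s0' : 0 <= s by rewrite sumr_ge0 // => *; exact: cabs2_ge0.
have e1 : ln (1 + c / (s + sigma2 i)) <= c / sigma2 i.
  apply: le_trans (le_ln1Dx _) _.
    by apply: lt_le_trans (_ : 0 <= _); [lra| rewrite divr_ge0 //; lra].
  rewrite ler_wpM2l // lef_pV2 ?posrE //; lra.
have e2 : c <= CN R N * sqnorm (h i) * tpower w.
  apply: le_trans; first exact: hdot_bound.
  rewrite -mulrA ler_wpM2l ?CN_ge0 // ler_wpM2l ?sqnorm_ge0 //.
  rewrite /tpower; exact: (@sum_ge_term R K (fun j => sqnorm (w j)) i (fun j => sqnorm_ge0 _ (w j))).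
have e3 : c / sigma2 i <= tpower w * (CN R N * sqnorm (h i)) / sigma2 i.
  by rewrite ler_wpM2r ?invr_ge0 ?(ltW s0) // [tpower w * _]mulrC.
have -> : tpower w * (CN R N * sqnorm (h i) / sigma2 i / ln 2) =
  (tpower w * (CN R N * sqnorm (h i)) / sigma2 i) / ln 2 by rewrite !mulrA.
by rewrite ler_wpM2r ?invr_ge0 ?(ltW l2) // (le_trans e1 e3).
Qed.

Definition cst {R : realType} {N K} (h : 'I_K -> 'cV[R[i]]_N) (sigma2 : 'I_K -> R) : R :=
  \sum_(i < K) (CN R N * sqnorm (h i) / sigma2 i / ln 2).

Lemma cst_ge0 {R : realType} {N K} (h : 'I_K -> 'cV[R[i]]_N) sigma2 :
  (forall k, 0 < sigma2 k) -> 0 <= cst h sigma2.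
Proof.
move=> s0; rewrite /cst sumr_ge0 // => i _.
have l2 : 0 < ln (2 : R) by apply: ln_gt0; lra.
by rewrite !divr_ge0 ?mulr_ge0 ?CN_ge0 ?sqnorm_ge0 ?(ltW (s0 i)) ?(ltW l2).
Qed.

Lemma f1_bound {R : realType} {N K} (h : 'I_K -> 'cV[R[i]]_N) sigma2 w :
  (forall k, 0 < sigma2 k) -> f1 h sigma2 w <= tpower w * cst h sigma2.
Proof.
move=> s0; rewrite /f1 /cst mulr_sumr; apply: ler_sum => i _.
apply: le_trans; [exact: rate_le_Rki | exact: Rki_bound].
Qed.

Lemma f1_boundP {R : realType} {N K} (h : 'I_K -> 'cV[R[i]]_N) sigma2 w P :
  (forall k, 0 < sigma2 k) -> tpower w <= P -> f1 h sigma2 w <= P * cst h sigma2.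
Proof.
move=> s0 hP; apply: le_trans; first exact: f1_bound.
by rewrite ler_wpM2r // cst_ge0.
Qed.

Lemma f1_ge0 {R : realType} {N K} (h : 'I_K -> 'cV[R[i]]_N) sigma2 Rth P w :
  (forall k, 0 <= Rth k) -> feasible h sigma2 Rth P w -> 0 <= f1 h sigma2 w.
Proof.
move=> R0 [_ [q _]]; rewrite /f1 sumr_ge0 // => i _.
exact: le_trans (R0 i) (q i).
Qed.
Arguments f1_ge0 {R N K h sigma2 Rth P w}.


Lemma D_pos {R : realType} {N K} (eps0 Pl : R) (w : 'I_K -> 'cV[R[i]]_N) :
  0 < eps0 -> 0 < Pl -> 0 < eps0^-1 * tpower w + Pl.
Proof.
move=> e0 p0; apply: ltr_wpDl => //.
by rewrite mulr_ge0 ?invr_ge0 ?(ltW e0) ?tpower_ge0.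
Qed.
Arguments D_pos {R N K eps0 Pl w}.


Lemma f2_le {R : realType} {N K} (h : 'I_K -> 'cV[R[i]]_N) sigma2 eps0 Pl Rth P w :
  (forall k, 0 < sigma2 k) -> (forall k, 0 <= Rth k) -> 0 < eps0 -> 0 < Pl ->
  feasible h sigma2 Rth P w -> f2 h sigma2 eps0 Pl w <= P * cst h sigma2 / Pl.
Proof.
move=> s0 R0 e0 p0 fw.
have f0 := f1_ge0 R0 fw.
rewrite /f2; apply: (@le_trans _ _ (f1 h sigma2 w / Pl)).
  rewrite ler_wpM2l // lef_pV2 ?posrE ?D_pos //.
  by rewrite lerDr mulr_ge0 ?invr_ge0 ?(ltW e0) ?tpower_ge0.
rewrite ler_wpM2r ?invr_ge0 ?(ltW p0) //.
by apply: f1_boundP => //; case: fw.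
Qed.
Arguments f2_le {R N K h sigma2 eps0 Pl Rth P w}.


Lemma f2_ub {R : realType} {N K} (h : 'I_K -> 'cV[R[i]]_N) sigma2 eps0 Pl Rth P w :
  (forall k, 0 < sigma2 k) -> (forall k, 0 <= Rth k) -> 0 < eps0 -> 0 < Pl ->
  feasible h sigma2 Rth P w -> f2 h sigma2 eps0 Pl w <= f2star h sigma2 eps0 Pl Rth P.
Proof.
move=> s0 R0 e0 p0 fw; apply: sup_upper_bound; last by exists w.
split; first by exists (f2 h sigma2 eps0 Pl w), w.
exists (P * cst h sigma2 / Pl) => _ [z fz <-].
exact: f2_le fz.
Qed.
Arguments f2_ub {R N K h sigma2 eps0 Pl Rth P w}.


Lemma f1F_ub {R : realType} {N K} (h : 'I_K -> 'cV[R[i]]_N) sigma2 Rth P w :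
  (forall k, 0 < sigma2 k) ->
  feasible h sigma2 Rth P w -> f1 h sigma2 w <= sup [set f1 h sigma2 x | x in feasible h sigma2 Rth P].
Proof.
move=> s0 fw; apply: sup_upper_bound; last by exists w.
split; first by exists (f1 h sigma2 w), w.
exists (P * cst h sigma2) => _ [z [pz _] <-].
exact: f1_boundP.
Qed.
Arguments f1F_ub {R N K h sigma2 Rth P w}.


Lemma f1star_ub {R : realType} {N K} (h : 'I_K -> 'cV[R[i]]_N) sigma2 P w :
  (forall k, 0 < sigma2 k) ->
  power_ok P w -> sic_ok h w -> f1 h sigma2 w <= f1star h sigma2 P.
Proof.
move=> s0 pw sw; apply: sup_upper_bound; last by exists w.
split; first by exists (f1 h sigma2 w), w.
exists (P * cst h sigma2) => _ [z [pz _] <-].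
exact: f1_boundP.
Qed.
Arguments f1star_ub {R N K h sigma2 P w}.


Lemma f2_hassup {R : realType} {N K} (h : 'I_K -> 'cV[R[i]]_N) sigma2 eps0 Pl Rth P w :
  (forall k, 0 < sigma2 k) -> (forall k, 0 <= Rth k) -> 0 < eps0 -> 0 < Pl ->
  feasible h sigma2 Rth P w -> has_sup [set f2 h sigma2 eps0 Pl x | x in feasible h sigma2 Rth P].
Proof.
move=> s0 R0 e0 p0 fw.
split; first by exists (f2 h sigma2 eps0 Pl w), w.
exists (P * cst h sigma2 / Pl) => _ [z fz <-].
exact: f2_le fz.
Qed.
Arguments f2_hassup {R N K h sigma2 eps0 Pl Rth P w}.

Lemma f2_eq {R : realType} {N K} (h : 'I_K -> 'cV[R[i]]_N) sigma2 (eps0 Pl : R) w :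
  0 < eps0 -> 0 < Pl ->
  f2 h sigma2 eps0 Pl w * (eps0^-1 * tpower w + Pl) = f1 h sigma2 w.
Proof. by move=> e0 p0; rewrite /f2 divfK // gt_eqF // D_pos. Qed.

Theorem lemma1 (R : realType) (N K : nat)
  (h : 'I_K -> 'cV[R[i]]_N) (sigma2 : 'I_K -> R)
  (eps0 Pl Pava Pg : R) (Rth : 'I_K -> R) :
  (forall k : 'I_K, 0 < sigma2 k) ->
  (forall j k : 'I_K, (j <= k)%N -> sqnorm (h k) <= sqnorm (h j)) ->
  0 < eps0 -> eps0 <= 1 -> 0 < Pl ->
  (forall k : 'I_K, 0 <= Rth k) ->
  feasible h sigma2 Rth Pava !=set0 ->
  green_power h sigma2 eps0 Pl Rth Pg ->
  Pava <= Pg ->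
  forall (alpha beta : R) (w v : 'I_K -> 'cV[R[i]]_N),
    0 <= alpha <= 1 -> 0 <= beta <= 1 ->
    wopt h sigma2 eps0 Pl Rth Pava alpha w ->
    wopt h sigma2 eps0 Pl Rth Pava beta v ->
    f1 h sigma2 w / f1star h sigma2 Pava = f1 h sigma2 v / f1star h sigma2 Pava /\
    f2 h sigma2 eps0 Pl w / f2star h sigma2 eps0 Pl Rth Pava
      = f2 h sigma2 eps0 Pl v / f2star h sigma2 eps0 Pl Rth Pava.
Proof.
move=> s0 hord e0 e1 p0 R0 [x0 fx0] [Pg0 [gmono gconst]] hPg alpha beta w v ha hb wo vo.
set M := sup [set f1 h sigma2 x | x in feasible h sigma2 Rth Pava].
set A := f1star h sigma2 Pava.
set B := f2star h sigma2 eps0 Pl Rth Pava.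
set Df := eps0^-1 * Pava + Pl.
have ie0 : 0 < eps0^-1 by rewrite invr_gt0.
have Pava0 : 0 <= Pava by case: fx0 => px0 _; exact: le_trans (tpower_ge0 x0) px0.
have DfP : 0 < Df by rewrite /Df; apply: ltr_wpDl => //; rewrite mulr_ge0 // ltW.
have f1M : forall x, feasible h sigma2 Rth Pava x -> f1 h sigma2 x <= M.
  by move=> x fx; exact: f1F_ub s0 fx.
have f1ge : forall x, feasible h sigma2 Rth Pava x -> 0 <= f1 h sigma2 x.
  by move=> x fx; exact: f1_ge0 R0 fx.
have f2B : forall x, feasible h sigma2 Rth Pava x -> f2 h sigma2 eps0 Pl x <= B.
  by move=> x fx; exact: f2_ub s0 R0 e0 p0 fx.
have f2ge : forall x, feasible h sigma2 Rth Pava x -> 0 <= f2 h sigma2 eps0 Pl x.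
  by move=> x fx; rewrite /f2 divr_ge0 ?f1ge // ltW // D_pos.
have Dle : forall x, feasible h sigma2 Rth Pava x -> eps0^-1 * tpower x + Pl <= Df.
  by move=> x [px _]; rewrite /Df lerD2r ler_wpM2l // ltW.
have f2lo : forall x, feasible h sigma2 Rth Pava x ->
    f1 h sigma2 x <= f2 h sigma2 eps0 Pl x * Df.
  by move=> x fx; rewrite -(f2_eq h sigma2 eps0 Pl x e0 p0) ler_wpM2l ?f2ge ?Dle.
have M0 : 0 <= M := le_trans (f1ge x0 fx0) (f1M x0 fx0).
have MA : M <= A.
  apply: ge_sup; first by exists (f1 h sigma2 x0), x0.
  by move=> _ [x [px [_ sx]] <-]; exact: f1star_ub.
have MBD : M <= B * Df.
  apply: ge_sup; first by exists (f1 h sigma2 x0), x0.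
  move=> _ [x fx <-]; apply: le_trans (f2lo x fx) _.
  by rewrite ler_wpM2r ?f2B // ltW.
have hsB : has_sup [set f2 h sigma2 eps0 Pl x | x in feasible h sigma2 Rth Pava].
  exact: f2_hassup s0 R0 e0 p0 fx0.
have BDM : B * Df <= M.
  rewrite leNgt; apply/negP => hlt.
  have B0 : 0 < B by nra.
  have [Pz|Ppos] : Pava = 0 \/ 0 < Pava.
    by move: Pava0; rewrite le_eqVlt => /orP[/eqP <-|->]; [left|right].
  - suff : B <= M / Df by rewrite ler_pdivlMr // => /(lt_le_trans hlt); rewrite ltxx.
    apply: ge_sup; first by exists (f2 h sigma2 eps0 Pl x0), x0.
    move=> _ [x fx <-]; rewrite ler_pdivlMr //.
    have tp0 : tpower x = Pava.
      by apply/le_anti; rewrite Pz tpower_ge0 andbT; case: fx => px _; rewrite -Pz.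
    by rewrite /Df -tp0 f2_eq //; exact: f1M.
  set q := B * eps0^-1.
  have q0 : 0 < q by rewrite mulr_gt0.
  set d := (B * Df - M) / (2 * q).
  have d0 : 0 < d by rewrite divr_gt0 ?subr_gt0 // mulr_gt0.
  have qd : q * d = (B * Df - M) / 2 by rewrite /d; field; rewrite gt_eqF.
  have [m [m0 [mP md]]] : exists m, 0 < m /\ m <= Pava /\ m <= d.
    case: (leP Pava d) => hPd; first by exists Pava.
    by exists d; split => //; split; [exact: ltW|].
  set P' := Pava - m / 2.
  have P'0 : 0 <= P' by rewrite /P'; lra.
  have P'lt : P' < Pava by rewrite /P'; lra.
  set DP := eps0^-1 * P' + Pl.
  have DP0 : 0 < DP by rewrite /DP; apply: ltr_wpDl => //; rewrite mulr_ge0 // ltW.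
  have qm : q * m <= q * d by rewrite ler_wpM2l // ltW.
  have eqDP : B * DP = B * Df - q * m / 2 by rewrite /DP /Df /P' /q; ring.
  have MDP : M < B * DP by rewrite eqDP; lra.
  have MB : M / DP < B by rewrite ltr_pdivrMr.
  have [u [fu [hu1 hu2]]] : exists u, feasible h sigma2 Rth Pava u /\
      M / DP < f2 h sigma2 eps0 Pl u /\ P' <= tpower u.
    case: (pselect (feasible h sigma2 Rth P' !=set0)) => [ne|emp].
    - have gl := gmono P' Pava P'0 P'lt hPg ne.
      set T := Num.max (M / DP) (f2star h sigma2 eps0 Pl Rth P').
      have TB : T < B by rewrite /T gt_max MB gl.
      have eT : 0 < B - T by rewrite subr_gt0.
      have [_ [u fu <-] hy] := sup_adherent eT hsB.
      have Tu : T < f2 h sigma2 eps0 Pl u by move: hy; rewrite -/B opprB addrC subrK.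
      move: Tu; rewrite /T gt_max => /andP[Tu1 Tu2].
      exists u; split => //; split => //.
      rewrite leNgt; apply/negP => hlt'.
      have : f2 h sigma2 eps0 Pl u <= f2star h sigma2 eps0 Pl Rth P'.
        apply: f2_ub s0 R0 e0 p0 _; case: fu => _ fu'; split => //; exact: ltW.
      by rewrite leNgt Tu2.
    - have eT : 0 < B - M / DP by rewrite subr_gt0.
      have [_ [u fu <-] hy] := sup_adherent eT hsB.
      have Tu : M / DP < f2 h sigma2 eps0 Pl u by move: hy; rewrite -/B opprB addrC subrK.
      exists u; split => //; split => //.
      rewrite leNgt; apply/negP => hlt'; apply: emp; exists u.
      case: fu => _ fu'; split => //; exact: ltW.
  have : M < f1 h sigma2 u.
    rewrite -(f2_eq h sigma2 eps0 Pl u e0 p0).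
    apply: (lt_le_trans (_ : M < f2 h sigma2 eps0 Pl u * DP)).
      by rewrite -ltr_pdivrMr.
    by rewrite ler_wpM2l ?f2ge // /DP lerD2r ler_wpM2l ?(ltW ie0).
  by move=> hM; have := f1M u fu; rewrite leNgt hM.
have BDf : B * Df = M by apply/le_anti; rewrite BDM MBD.
have [Mz|Mpos] : M = 0 \/ 0 < M.
  by move: M0; rewrite le_eqVlt => /orP[/eqP <-|->]; [left|right].
  have z1 : forall x, feasible h sigma2 Rth Pava x -> f1 h sigma2 x = 0.
    by move=> x fx; apply/le_anti; rewrite f1ge // andbT -Mz f1M.
  have z2 : forall x, feasible h sigma2 Rth Pava x -> f2 h sigma2 eps0 Pl x = 0.
    by move=> x fx; rewrite /f2 z1 // mul0r.
  by case: wo => fw _; case: vo => fv _; rewrite !z1 // !z2.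
have Bpos : 0 < B by move: Mpos; rewrite -BDf pmulr_lgt0.
have Apos : 0 < A := lt_le_trans Mpos MA.
have key : forall al u, 0 <= al <= 1 -> wopt h sigma2 eps0 Pl Rth Pava al u ->
    f1 h sigma2 u = M /\ f2 h sigma2 eps0 Pl u = B.
  move=> al u /andP[a0 a1] [fu ou].
  have lb : forall x, feasible h sigma2 Rth Pava x ->
      (1 - al) * (f1 h sigma2 x / A) + al * (f1 h sigma2 x / M) <=
      wobj h sigma2 eps0 Pl Rth Pava al u.
    move=> x fx; apply: le_trans (ou x fx); rewrite /wobj -/A -/B.
    rewrite lerD2l ler_wpM2l // ler_pdivrMr // -BDf mulrA divfK ?gt_eqF //.
    exact: f2lo.
  have c0 : 0 < (1 - al) / A + al / M.
    case: (ltP al 1) => hal.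
      apply: ltr_pwDl; first by rewrite divr_gt0 // subr_gt0.
      by rewrite divr_ge0 // ltW.
    have -> : al = 1 by apply/le_anti; rewrite a1 hal.
    by rewrite subrr mul0r add0r mul1r invr_gt0.
  have Mle : M * ((1 - al) / A + al / M) <= wobj h sigma2 eps0 Pl Rth Pava al u.
    rewrite -ler_pdivlMr //; apply: ge_sup; first by exists (f1 h sigma2 x0), x0.
    move=> _ [x fx <-]; rewrite ler_pdivlMr //; apply: le_trans (lb x fx).
    by rewrite le_eqVlt; apply/orP; left; apply/eqP; field; rewrite ?gt_eqF.
  move: Mle; rewrite /wobj -/A -/B.
  have -> : M * ((1 - al) / A + al / M) = (1 - al) * (M / A) + al.
    by field; rewrite ?gt_eqF.
  have t1 : f1 h sigma2 u / A <= M / A by rewrite ler_wpM2r ?invr_ge0 ?(ltW Apos) ?f1M.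
  have t2 : f2 h sigma2 eps0 Pl u / B <= 1 by rewrite ler_pdivrMr // mul1r; exact: f2B.
  move: t1 t2; set T1 := f1 h sigma2 u / A; set m1 := M / A; set T2 := f2 h sigma2 eps0 Pl u / B.
  move=> t1 t2 hle.
  case: (ltP al 1) => hal.
    have e : T1 = m1.
      apply/le_anti; rewrite t1 /=.
      have : (1 - al) * (m1 - T1) <= 0 by nra.
      by rewrite pmulr_rle0 ?subr_gt0 // subr_le0.
    have f1u : f1 h sigma2 u = M.
      by rewrite -(divfK (negbT (gt_eqF Apos)) (f1 h sigma2 u)) -/T1 e /m1 divfK ?gt_eqF.
    split => //; apply/le_anti; rewrite f2B //=.
    by rewrite -(ler_pM2r DfP) BDf -f1u f2lo.
  have al1 : al = 1 by apply/le_anti; rewrite a1 hal.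
  move: hle; rewrite al1 subrr !mul0r !add0r mul1r => hT2.
  have f2u : f2 h sigma2 eps0 Pl u = B.
    apply/le_anti; rewrite f2B //=.
    by move: hT2; rewrite /T2 ler_pdivlMr // mul1r.
  have tpu : tpower u = Pava.
    apply/le_anti; rewrite (proj1 fu) /= leNgt; apply/negP => hlt.
    have fu' : feasible h sigma2 Rth (tpower u) u by case: fu => _ fu'; split => //; rewrite /power_ok.
    have gl := gmono (tpower u) Pava (tpower_ge0 u) hlt hPg (ex_intro _ u fu').
    have := f2_ub s0 R0 e0 p0 fu'.
    by rewrite f2u leNgt gl.
  split => //.
  by rewrite -(f2_eq h sigma2 eps0 Pl u e0 p0) f2u tpu.
have [w1 w2] := key alpha w ha wo.
have [v1 v2] := key beta v hb vo.
by rewrite w1 w2 v1 v2.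
Qed.
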